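(* Let $A\in\mathbb{R}^{n\times n}$, $B\in\mathbb{R}^{n\times m}$, $C\in\mathbb{R}^{p\times n}$ with $(A,C)$ observable, $\ell$ its observability index, and $\mathbf{F}_\ell,\mathbf{L}_\ell,\mathbf{B}_\ell,\mathbf{A}_\ell$ as in the context. For each $\hat x$, $\hat\chi$ and each sequence $\{u(k)\}_{k=0}^\infty$ there exists $\hat\xi$ such that the solution $(x(\cdot),\chi(\cdot))$ of $x^+=Ax+Bu$, $y=Cx$, $\chi^+=\mathbf{F}_\ell\chi+\mathbf{L}_\ell y+\mathbf{B}_\ell u$ with $(x(0),\chi(0))=(\hat x,\hat\chi)$, its output $y(\cdot)=Cx(\cdot)$, and the solution $\xi(\cdot)$ of $\xi^+=\mathbf{A}_\ell\xi+\mathbf{B}_\ell v$ with $\xi(\ell)=\hat\xi$ and $v(k)=u(k)$ for $k\ge\ell$ satisfy $\xi(k)=(y(k-\ell),\dots,y(k-1),u(k-\ell),\dots,u(k-1))=\chi(k)$ for all $k\ge\ell$.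
   Context: $(v_1,\dots,v_r)$ denotes a stacked column vector. The observability index $\ell$ is the smallest $l$ with $\operatorname{rank}[C;CA;\dots;CA^{l-1}]=n$. $\mathcal{O}_\ell=[C;CA;\dots;CA^{\ell-1}]$; $\mathcal{T}_\ell\in\mathbb{R}^{p\ell\times m\ell}$ block lower triangular with $(i,j)$ block $CA^{i-j-1}B$ if $i>j$ and $0$ otherwise; $\mathcal{R}_\ell=[A^{\ell-1}B\ \cdots\ AB\ B]$; $\mathcal{O}_\ell^{L}$ a fixed left inverse of $\mathcal{O}_\ell$. $\mathbf{F}_\ell=\mathrm{blockdiag}(S_p,S_m)$, $S_q\in\mathbb{R}^{q\ell\times q\ell}$ with blocks $I_q$ at block positions $(i,i+1)$, $i=1,\dots,\ell-1$, zeros elsewhere; $\mathbf{L}_\ell\in\mathbb{R}^{(p\ell+m\ell)\times p}$ with $I_p$ in rows $p\ell-p+1,\dots,p\ell$, zeros elsewhere; $\mathbf{B}_\ell\in\mathbb{R}^{(p\ell+m\ell)\times m}$ with $I_m$ in its last $m$ rows, zeros elsewhere. $Z_\ell=[CA^\ell\mathcal{O}_\ell^L\ \ C\mathcal{R}_\ell-CA^\ell\mathcal{O}_\ell^L\mathcal{T}_\ell]$, $\mathbf{A}_\ell=\mathbf{F}_\ell+\mathbf{L}_\ell Z_\ell$. *)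

(* Defs.v *)
(* Block matrices indexed block-major: a flat index k of a
   matrix with l blocks of height q refers to block k %/ q (0-based), row k %% q. *)
From HB Require Import structures.
From mathcomp Require Import all_boot all_order all_algebra.
Set Implicit Arguments. Unset Strict Implicit. Unset Printing Implicit Defensive.
Import Order.TTheory GRing.Theory Num.Theory.
Local Open Scope ring_scope.

Section Defs.
Variable R : realFieldType.

(* entry (i,j) of M, with natural-number indices; 0 if out of range *)
Definition mxent (a b : nat) (M : 'M[R]_(a, b)) (i j : nat) : R :=
  match (insub i : option 'I_a), (insub j : option 'I_b) with
  | Some i', Some j' => M i' j'
  | _, _ => 0
  end.

Definition blockmx (a b l1 l2 : nat) (F : nat -> nat -> 'M[R]_(a, b))
  : 'M[R]_(l1 * a, l2 * b) :=
  \matrix_(k < l1 * a, k' < l2 * b) mxent (F (k %/ a)%N (k' %/ b)%N) (k %% a)%N (k' %% b)%N.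

Definition blockcol (a b l : nat) (F : nat -> 'M[R]_(a, b)) : 'M[R]_(l * a, b) :=
  \matrix_(k < l * a, j < b) mxent (F (k %/ a)%N) (k %% a)%N j.

Definition blockrow (a b l : nat) (F : nat -> 'M[R]_(a, b)) : 'M[R]_(a, l * b) :=
  \matrix_(i < a, k' < l * b) mxent (F (k' %/ b)%N) i (k' %% b)%N.

Variables (n m p : nat).

Definition obsmx (A : 'M[R]_n) (C : 'M[R]_(p, n)) (l : nat) : 'M[R]_(l * p, n) :=
  blockcol l (fun i => C *m A ^+ i).

Definition is_obs_index (A : 'M[R]_n) (C : 'M[R]_(p, n)) (l : nat) : Prop :=
  \rank (obsmx A C l) = n /\ forall l', (l' < l)%N -> \rank (obsmx A C l') != n.

Definition observable (A : 'M[R]_n) (C : 'M[R]_(p, n)) : Prop :=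
  \rank (obsmx A C n) = n.

Definition toeplmx (A : 'M[R]_n) (B : 'M[R]_(n, m)) (C : 'M[R]_(p, n)) (l : nat)
  : 'M[R]_(l * p, l * m) :=
  blockmx l l (fun i j => if (j < i)%N then C *m A ^+ (i - j - 1) *m B else 0).

Definition reachmx (A : 'M[R]_n) (B : 'M[R]_(n, m)) (l : nat) : 'M[R]_(n, l * m) :=
  blockrow l (fun j => A ^+ (l - 1 - j) *m B).

Definition shiftmx (q l : nat) : 'M[R]_(l * q) :=
  blockmx l l (fun i j => if j == i.+1 then (1%:M : 'M[R]_q) else 0).

Definition Fmx (l : nat) : 'M[R]_(l * p + l * m) :=
  block_mx (shiftmx p l) 0 0 (shiftmx m l).

Definition Lmx (l : nat) : 'M[R]_(l * p + l * m, p) :=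
  col_mx (blockcol l (fun i => if i == l.-1 then (1%:M : 'M[R]_p) else 0)) 0.

Definition Bmx (l : nat) : 'M[R]_(l * p + l * m, m) :=
  col_mx 0 (blockcol l (fun i => if i == l.-1 then (1%:M : 'M[R]_m) else 0)).

Definition Zmx (A : 'M[R]_n) (B : 'M[R]_(n, m)) (C : 'M[R]_(p, n)) (l : nat)
  (OL : 'M[R]_(n, l * p)) : 'M[R]_(p, l * p + l * m) :=
  row_mx (C *m A ^+ l *m OL)
         (C *m reachmx A B l - C *m A ^+ l *m OL *m toeplmx A B C l).

Definition Amx (A : 'M[R]_n) (B : 'M[R]_(n, m)) (C : 'M[R]_(p, n)) (l : nat)
  (OL : 'M[R]_(n, l * p)) : 'M[R]_(l * p + l * m) :=
  Fmx l + Lmx l *m Zmx A B C OL.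

End Defs.

Definition stackv (R : realFieldType) (q l : nat) (w : nat -> 'cV[R]_q) (k0 : nat)
  : 'cV[R]_(l * q) :=
  \col_(i < l * q) mxent (w (k0 + i %/ q)%N) (i %% q)%N 0.

(* Main.v *)
Require Import Defs.
From HB Require Import structures.
From mathcomp Require Import all_boot all_order all_algebra zify.
Set Implicit Arguments. Unset Strict Implicit. Unset Printing Implicit Defensive.
Import Order.TTheory GRing.Theory Num.Theory.
Local Open Scope ring_scope.

Section Aux.
Variable R : realFieldType.

Lemma mxentE a b (M : 'M[R]_(a, b)) (i : 'I_a) (j : 'I_b) : mxent M i j = M i j.
Proof. by rewrite /mxent !valK. Qed.

Lemma mxent_in a b (M : 'M[R]_(a, b)) i j (hi : (i < a)%N) (hj : (j < b)%N) :
  mxent M i j = M (Ordinal hi) (Ordinal hj).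
Proof. by rewrite -mxentE. Qed.

Lemma mxent_out a b (M : 'M[R]_(a, b)) i j : ~~ ((i < a) && (j < b))%N -> mxent M i j = 0.
Proof.
rewrite negb_and => /orP [h|h]; rewrite /mxent.
  by rewrite insubN.
by case: (insub i) => // ?; rewrite insubN.
Qed.

Lemma mxent_mul a b c (M : 'M[R]_(a, b)) (N : 'M[R]_(b, c)) i j :
  mxent (M *m N) i j = \sum_(r < b) mxent M i r * mxent N r j.
Proof.
case: (boolP ((i < a) && (j < c))%N) => [/andP [hi hj]|h].
  rewrite (mxent_in _ hi hj) mxE; apply: eq_bigr => r _.
  rewrite (mxent_in _ hi (ltn_ord r)) (mxent_in _ (ltn_ord r) hj).
  by congr (M _ _ * N _ _); apply: val_inj.
rewrite mxent_out // big1 // => r _.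
move: h; rewrite negb_and => /orP [h|h].
  by rewrite (@mxent_out _ _ M) ?mul0r // negb_and h.
by rewrite (@mxent_out _ _ N) ?mulr0 // negb_and h orbT.
Qed.

Lemma mxent_add a b (M N : 'M[R]_(a, b)) i j :
  mxent (M + N) i j = mxent M i j + mxent N i j.
Proof.
case: (boolP ((i < a) && (j < b))%N) => [/andP [hi hj]|h].
  by rewrite !(mxent_in _ hi hj) mxE.
by rewrite !mxent_out // addr0.
Qed.

Lemma mxent0 a b i j : mxent (0 : 'M[R]_(a, b)) i j = 0.
Proof.
case: (boolP ((i < a) && (j < b))%N) => [/andP [hi hj]|h].
  by rewrite !(mxent_in _ hi hj) mxE.
by rewrite !mxent_out.
Qed.

Lemma mxent_sum a b l (F : 'I_l -> 'M[R]_(a, b)) i j :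
  mxent (\sum_(k < l) F k) i j = \sum_(k < l) mxent (F k) i j.
Proof.
elim/big_rec2: _ => [|k x y _ H]; first by rewrite mxent0.
by rewrite mxent_add H.
Qed.

Lemma sum_flat l b (f : nat -> nat -> R) :
  \sum_(k < l * b) f (k %/ b)%N (k %% b)%N = \sum_(j < l) \sum_(r < b) f j r.
Proof.
case: (posnP b) => [->|b0].
  by rewrite muln0 big_ord0 big1 // => j _; rewrite big_ord0.
elim: l => [|l IH]; first by rewrite mul0n !big_ord0.
rewrite mulSnr big_split_ord /= IH big_ord_recr /=; congr (_ + _).
apply: eq_bigr => r _.
by rewrite divnMDl // divn_small // addn0 modnMDl modn_small.
Qed.

Lemma blockcol_mul a b c l (F : nat -> 'M[R]_(a, b)) (M : 'M[R]_(b, c)) :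
  blockcol l F *m M = blockcol l (fun i => F i *m M).
Proof.
apply/matrixP => k j; rewrite !mxE mxent_mul; apply: eq_bigr => r _.
by rewrite mxE mxentE.
Qed.

Lemma blockmx_mul_col a b c l1 l2 (F : nat -> nat -> 'M[R]_(a, b))
  (G : nat -> 'M[R]_(b, c)) :
  blockmx l1 l2 F *m blockcol l2 G =
  blockcol l1 (fun i => \sum_(j < l2) F i j *m G j).
Proof.
apply/matrixP => k j; rewrite !mxE mxent_sum.
under eq_bigr do rewrite !mxE.
rewrite (@sum_flat l2 b (fun u r => mxent (F (k %/ a)%N u) (k %% a)%N r * mxent (G u) r j)).
apply: eq_bigr => u _; rewrite mxent_mul; apply: eq_bigr => r _.
by rewrite mxentE.
Qed.

Lemma blockrow_mul_col a b c l (F : nat -> 'M[R]_(a, b)) (G : nat -> 'M[R]_(b, c)) :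
  blockrow l F *m blockcol l G = \sum_(j < l) F j *m G j.
Proof.
apply/matrixP => i j; rewrite !mxE summxE.
under eq_bigr do rewrite !mxE.
rewrite (@sum_flat l b (fun u r => mxent (F u) i r * mxent (G u) r j)).
apply: eq_bigr => u _; rewrite mxE; apply: eq_bigr => r _.
by rewrite !mxentE.
Qed.

Lemma pos_of_ord l a (k : 'I_(l * a)) : (0 < a)%N.
Proof. have := ltn_ord k; move: (nat_of_ord k) => k'; by case: a k => // k; rewrite muln0. Qed.

Lemma blockcol_add a b l (F G : nat -> 'M[R]_(a, b)) :
  blockcol l F + blockcol l G = blockcol l (fun i => F i + G i).
Proof. by apply/matrixP => k j; rewrite !mxE mxent_add. Qed.

Lemma blockcol_ext a b l (F G : nat -> 'M[R]_(a, b)) :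
  (forall i, (i < l)%N -> F i = G i) -> blockcol l F = blockcol l G.
Proof.
move=> h; apply/matrixP => k j; rewrite !mxE h //.
have a0 := pos_of_ord k.
by rewrite ltn_divLR // ltn_ord.
Qed.

Lemma stackv_blockcol q l (w : nat -> 'cV[R]_q) k0 :
  stackv l w k0 = blockcol l (fun i => w (k0 + i)%N).
Proof. by apply/matrixP => k j; rewrite !mxE (ord1 j). Qed.

Unset Implicit Arguments.
Definition blk q l (v : 'cV[R]_(l * q)) (i : nat) : 'cV[R]_q :=
  \col_(r < q) mxent v (i * q + r)%N 0.


Set Implicit Arguments.
Lemma blk_blockcol q l (v : 'cV[R]_(l * q)) : v = blockcol l (blk q l v).
Proof.
apply/matrixP => k j; rewrite !mxE (ord1 j).
have q0 := pos_of_ord k.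
rewrite (mxent_in _ (ltn_pmod k q0) (ltn0Sn 0)) mxE /= -divn_eq.
by rewrite (mxent_in _ (ltn_ord k) (ltn0Sn 0)); congr (v _ _); apply: val_inj.
Qed.

Lemma blk_blockcol2 q l (F : nat -> 'cV[R]_q) i : (i < l)%N -> blk q l (blockcol l F) i = F i.
Proof.
move=> hi; apply/matrixP => r j; rewrite !mxE (ord1 j).
have hr : (i * q + r < l * q)%N.
  have := ltn_ord r; nia.
rewrite (mxent_in _ hr (ltn0Sn 0)) mxE /=.
have q0 : (0 < q)%N := leq_ltn_trans (leq0n r) (ltn_ord r).
rewrite divnMDl // divn_small // addn0 modnMDl modn_small // (mxent_in _ (ltn_ord r) (ltn0Sn 0)).
by congr (F i _ _); apply: val_inj.
Qed.


Definition Sel q l : 'M[R]_(l * q, q) :=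
  blockcol l (fun i => if i == l.-1 then (1%:M : 'M[R]_q) else 0).

Lemma shift_gen q l (v : 'cV[R]_(l * q)) (a : 'cV[R]_q) :
  shiftmx R q l *m v + Sel q l *m a =
  blockcol l (fun i => (if (i.+1 < l)%N then blk q l v i.+1 else 0) +
                       (if i == l.-1 then a else 0)).
Proof.
have -> : shiftmx R q l *m v = shiftmx R q l *m blockcol l (blk q l v) by rewrite -blk_blockcol.
rewrite /shiftmx blockmx_mul_col /Sel blockcol_mul blockcol_add; apply: blockcol_ext => i hi.
congr (_ + _); last by case: eqP => _; rewrite ?mul1mx ?mul0mx.
case: ifP => h.
  rewrite (bigD1 (Ordinal h)) //= eqxx mul1mx big1 ?addr0 // => j hj.
  rewrite ifN ?mul0mx //; apply: contra hj => /eqP e; apply/eqP/val_inj; exact: e.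
rewrite big1 // => j _; rewrite ifN ?mul0mx //; apply/eqP => e.
by move: (ltn_ord j); rewrite e h.
Qed.

Lemma shift_stack q l (w : nat -> 'cV[R]_q) k0 :
  shiftmx R q l *m stackv l w k0 + Sel q l *m w (k0 + l)%N = stackv l w k0.+1.
Proof.
rewrite shift_gen !stackv_blockcol; apply: blockcol_ext => i hi.
case: ifP => h.
  rewrite blk_blockcol2 // ifN ?addr0; first by congr w; lia.
  by apply/eqP; lia.
move/negbT: h; rewrite -leqNgt => h.
have -> : i = l.-1 by lia.
by rewrite eqxx add0r; congr w; lia.
Qed.

Lemma stepE (m p l : nat) (t : 'cV[R]_(l * p)) (b : 'cV[R]_(l * m))
  (y : 'cV[R]_p) (uu : 'cV[R]_m) :
  @Fmx R m p l *m col_mx t b + @Lmx R m p l *m y + @Bmx R m p l *m uu =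
  col_mx (shiftmx R p l *m t + Sel p l *m y) (shiftmx R m l *m b + Sel m l *m uu).
Proof.
rewrite /Fmx /Lmx /Bmx mul_block_col !mul_col_mx !mul0mx !add_col_mx.
by rewrite !addr0 add0r.
Qed.

Lemma xform n m (A : 'M[R]_n) (B : 'M[R]_(n, m)) (x : nat -> 'cV[R]_n)
  (u : nat -> 'cV[R]_m) (hx : forall k, x k.+1 = A *m x k + B *m u k) k0 i :
  x (k0 + i)%N = A ^+ i *m x k0 + \sum_(j < i) A ^+ (i - j - 1) *m B *m u (k0 + j)%N.
Proof.
elim: i => [|i IH].
  by rewrite addn0 big_ord0 expr0 -idmxE mul1mx addr0.
rewrite addnS hx IH big_ord_recr /= exprS -mulmxE mulmxDr mulmxA -addrA.
congr (_ + _).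
rewrite subSnn subnn expr0 -idmxE mul1mx; congr (_ + _).
rewrite mulmx_sumr; apply: eq_bigr => j _.
rewrite !mulmxA mulmxE -exprS; congr (_ ^+ _ *m _ *m _).
have := ltn_ord j; lia.
Qed.


Lemma L1 n m p (A : 'M[R]_n) (B : 'M[R]_(n, m)) (C : 'M[R]_(p, n))
  (x : nat -> 'cV[R]_n) (u : nat -> 'cV[R]_m)
  (hx : forall k, x k.+1 = A *m x k + B *m u k) k0 l :
  stackv l (fun j => C *m x j) k0 =
  obsmx A C l *m x k0 + toeplmx A B C l *m stackv l u k0.
Proof.
rewrite /obsmx /toeplmx !stackv_blockcol blockcol_mul blockmx_mul_col blockcol_add.
apply: blockcol_ext => i hi /=.
rewrite (xform hx k0 i) mulmxDr mulmxA mulmx_sumr; congr (_ + _).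
symmetry; rewrite (bigID (fun j : 'I_l => (j < i)%N)) /=.
rewrite [X in _ + X]big1 ?addr0; last by move=> j /negbTE ->; rewrite mul0mx.
rewrite (eq_bigr (fun j : 'I_l => C *m (A ^+ (i - j - 1) *m B *m u (k0 + j)%N))); last first.
  by move=> j ->; rewrite !mulmxA.
by rewrite (big_ord_narrow (ltnW hi)).
Qed.

Lemma L2 n m (A : 'M[R]_n) (B : 'M[R]_(n, m))
  (x : nat -> 'cV[R]_n) (u : nat -> 'cV[R]_m)
  (hx : forall k, x k.+1 = A *m x k + B *m u k) k0 l :
  x (k0 + l)%N = A ^+ l *m x k0 + reachmx A B l *m stackv l u k0.
Proof.
rewrite stackv_blockcol /reachmx blockrow_mul_col (xform hx k0 l); congr (_ + _).
by apply: eq_bigr => j _; rewrite (subnAC l 1 j).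
Qed.

Lemma Zlem n m p (A : 'M[R]_n) (B : 'M[R]_(n, m)) (C : 'M[R]_(p, n))
  (x : nat -> 'cV[R]_n) (u : nat -> 'cV[R]_m)
  (hx : forall k, x k.+1 = A *m x k + B *m u k) l (OL : 'M[R]_(n, l * p))
  (hOL : OL *m obsmx A C l = 1%:M) k0 :
  Zmx A B C OL *m col_mx (stackv l (fun j => C *m x j) k0) (stackv l u k0) =
  C *m x (k0 + l)%N.
Proof.
have hP : C *m A ^+ l *m OL *m obsmx A C l = C *m A ^+ l by rewrite -mulmxA hOL mulmx1.
rewrite /Zmx mul_row_col (L1 C hx) (L2 hx) mulmxDr mulmxBl !mulmxDr mulmxA hP.
rewrite !mulmxA addrCA -addrA addrCA subrr addr0 addrC.
by [].
Qed.

End Aux.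

Theorem lemma7 (R : realFieldType) (n m p : nat)
  (A : 'M[R]_n) (B : 'M[R]_(n, m)) (C : 'M[R]_(p, n)) (l : nat)
  (OL : 'M[R]_(n, l * p)) :
  observable A C ->
  is_obs_index A C l ->
  OL *m obsmx A C l = 1%:M ->
  forall (xh : 'cV[R]_n) (chih : 'cV[R]_(l * p + l * m)) (u : nat -> 'cV[R]_m),
  exists xih : 'cV[R]_(l * p + l * m),
  forall (x : nat -> 'cV[R]_n) (chi xi : nat -> 'cV[R]_(l * p + l * m)),
    x 0%N = xh ->
    (forall k, x k.+1 = A *m x k + B *m u k) ->
    chi 0%N = chih ->
    (forall k, chi k.+1 = @Fmx R m p l *m chi k + @Lmx R m p l *m (C *m x k) + @Bmx R m p l *m u k) ->
    xi l = xih ->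
    (forall k, (l <= k)%N -> xi k.+1 = Amx A B C OL *m xi k + @Bmx R m p l *m u k) ->
    forall k, (l <= k)%N ->
      let z := col_mx (stackv l (fun j => C *m x j) (k - l))
                      (stackv l u (k - l)) in
      xi k = z /\ chi k = z.
Proof.
move=> _ _ hOL xh chih u.
pose xt := fix f k := if k is k'.+1 then A *m f k' + B *m u k' else xh.
exists (col_mx (stackv l (fun j => C *m xt j) 0) (stackv l u 0)).
move=> x chi xi hx0 hx hc0 hc hxi0 hxi k hk z.
have xE : forall j, x j = xt j.
  by elim=> [|j IH] //=; rewrite hx IH.
split.
  have H : forall d, xi (l + d)%N =
      col_mx (stackv l (fun j => C *m x j) d) (stackv l u d).
    elim=> [|d IH].
      rewrite addn0 hxi0; congr col_mx.
      by apply/matrixP => i j; rewrite !mxE xE.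
    rewrite addnS hxi ?leq_addr // IH /Amx mulmxDl -mulmxA (Zlem hx hOL).
    by rewrite stepE (addnC l d) !shift_stack.
  by rewrite /z -H subnKC.
have H : forall k i, (i < l)%N -> (l <= k + i)%N ->
    blk R p l (usubmx (chi k)) i = C *m x (k + i - l)%N /\
    blk R m l (dsubmx (chi k)) i = u (k + i - l)%N.
  elim=> [|k' IH] i hi hle.
    by move: (leq_trans hi hle); rewrite add0n ltnn.
  rewrite hc -[chi k']vsubmxK stepE col_mxKu col_mxKd !shift_gen !blk_blockcol2 //.
  case: ifP => h.
    have hne : (i == l.-1) = false by apply/negbTE/eqP; lia.
    rewrite hne !addr0; have [] := IH i.+1 h (leq_trans hle _); first by rewrite addSnnS.
    by move=> -> ->; rewrite addSnnS.
  move/negbT: h; rewrite -leqNgt => h.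
  have -> : i = l.-1 by lia.
  rewrite eqxx !add0r; have -> : (k'.+1 + l.-1 - l = k')%N by lia.
  by [].
rewrite /z -[chi k]vsubmxK [usubmx (chi k)]blk_blockcol [dsubmx (chi k)]blk_blockcol.
rewrite !stackv_blockcol; congr col_mx; apply: blockcol_ext => i hi;
  have [h1 h2] := H k i hi (leq_trans hk (leq_addr _ _));
  rewrite ?h1 ?h2 (_ : (k - l + i = k + i - l)%N) //; lia.
Qed.
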